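(* Let $A,B\in\mathcal{B}(\mathcal{H})$. Then (i) $w(AB\pm BA)\leq w^{1/2}(A^*A+AA^* )\,w^{1/2}(B^*B+BB^* )$; (ii) $w(AB\pm BA)\leq w^{1/2}(A^*A+B^*B)\,w^{1/2}(AA^*+BB^* )$.
   Context: $\mathcal{H}$ is a complex Hilbert space, $\mathcal{B}(\mathcal{H})$ the bounded linear operators on it, and $w(T)=\sup\{|\langle Tx,x\rangle|:\|x\|=1\}$ the numerical radius. *)

(* Defs.v *)
From HB Require Import structures.
From mathcomp Require Import all_boot all_order all_algebra.
From mathcomp Require Import all_classical all_reals.
From mathcomp Require Import complex.
Set Implicit Arguments. Unset Strict Implicit. Unset Printing Implicit Defensive.
Import Order.TTheory GRing.Theory Num.Theory.
Local Open Scope ring_scope.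
Local Open Scope classical_set_scope.

Section Hilbert.
Variables (R : realType) (V : lmodType R[i]).

Definition inner_product_axioms (ip : V -> V -> R[i]) : Prop :=
  [/\ (forall (a : R[i]) (x y z : V), ip (a *: x + y) z = a * ip x z + ip y z),
      (forall x y : V, ip y x = Num.conj (ip x y)),
      (forall x : V, 0 <= ip x x) &
      (forall x : V, ip x x = 0 -> x = 0)].

Definition hnorm (ip : V -> V -> R[i]) (x : V) : R := Num.sqrt (complex.Re (ip x x)).

Definition hcauchy (ip : V -> V -> R[i]) (u : nat -> V) : Prop :=
  forall e : R, 0 < e -> exists N : nat, forall m n : nat,
    (N <= m)%N -> (N <= n)%N -> hnorm ip (u m - u n) < e.

Definition hconverges (ip : V -> V -> R[i]) (u : nat -> V) (l : V) : Prop :=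
  forall e : R, 0 < e -> exists N : nat, forall n : nat,
    (N <= n)%N -> hnorm ip (u n - l) < e.

Definition is_hilbert (ip : V -> V -> R[i]) : Prop :=
  inner_product_axioms ip /\
  (forall u : nat -> V, hcauchy ip u -> exists l : V, hconverges ip u l).

Definition bounded_operator (ip : V -> V -> R[i]) (T : V -> V) : Prop :=
  (forall (a : R[i]) (x y : V), T (a *: x + y) = a *: T x + T y) /\
  (exists M : R, forall x : V, hnorm ip (T x) <= M * hnorm ip x).

Definition is_adjoint (ip : V -> V -> R[i]) (T S : V -> V) : Prop :=
  forall x y : V, ip (T x) y = ip x (S y).

Definition numrad (ip : V -> V -> R[i]) (T : V -> V) : R :=
  sup [set ComplexField.Normc.normc (ip (T x) x) | x in [set x : V | hnorm ip x = 1]].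

End Hilbert.

(* Main.v *)
Require Import Defs.
From HB Require Import structures.
From mathcomp Require Import all_boot all_order all_algebra.
From mathcomp Require Import all_classical all_reals.
From mathcomp Require Import complex.
From mathcomp Require Import ring lra.
Import Order.TTheory GRing.Theory Num.Theory.
Local Open Scope ring_scope. Local Open Scope complex_scope.

Section Aux.
Variables (R : realType) (V : lmodType R[i]) (ip : V -> V -> R[i]).
Hypothesis hip : inner_product_axioms ip.

Lemma ip0l z : ip 0 z = 0.
Proof.
case: hip => h1 _ _ _.
have e := h1 1 0 0 z. rewrite scale1r addr0 mul1r in e.
have := congr1 (fun u => u - ip 0 z) e. by rewrite addrK subrr => <-.
Qed.

Lemma ipD x y z : ip (x + y) z = ip x z + ip y z.
Proof. case: hip => h1 _ _ _. by rewrite -{1}[x]scale1r h1 mul1r. Qed.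

Lemma ipZ a x z : ip (a *: x) z = a * ip x z.
Proof. case: hip => h1 _ _ _. by rewrite -[a *: x]addr0 h1 ip0l addr0. Qed.

Lemma ipN x z : ip (- x) z = - ip x z.
Proof. by rewrite -scaleN1r ipZ mulN1r. Qed.

Lemma ipB x y z : ip (x - y) z = ip x z - ip y z.
Proof. by rewrite ipD ipN. Qed.

Lemma ipC x y : ip x y = Num.conj (ip y x).
Proof. by case: hip => _ h2 _ _. Qed.

Lemma ipself x : ip x x = (hnorm ip x ^+ 2)%:C.
Proof.
case: hip => _ _ h3 _. have := h3 x. rewrite /hnorm.
case: (ip x x) => a b. rewrite lecE /= => /andP [/eqP -> ha].
by rewrite sqr_sqrtr.
Qed.

Lemma hnorm_ge0 x : 0 <= hnorm ip x.
Proof. exact: sqrtr_ge0. Qed.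


Lemma ipZr w c y : ip w (c *: y) = Num.conj c * ip w y.
Proof.
rewrite ipC ipZ [ip w y]ipC.
case: c => c1 c2; case: (ip y w) => a b /=. congr (_ +i* _); ring.
Qed.

Lemma ipDr w x y : ip w (x + y) = ip w x + ip w y.
Proof.
rewrite ipC ipD [ip w x]ipC [ip w y]ipC.
case: (ip x w) => a b; case: (ip y w) => c d /=. congr (_ +i* _); ring.
Qed.

Lemma ip_real_cs u y : (complex.Re (ip u y)) ^+ 2 <= complex.Re (ip u u) * complex.Re (ip y y).
Proof.
have key : forall s : R, 0 <= complex.Re (ip u u) + 2 * s * complex.Re (ip u y) + s ^+ 2 * complex.Re (ip y y).
  move=> s.
  have h := ipself (u + s%:C *: y).
  have hre : 0 <= complex.Re (ip (u + s%:C *: y) (u + s%:C *: y)) by rewrite h /= exprn_ge0 // hnorm_ge0.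
  rewrite ipD !ipDr !ipZ !ipZr (ipC y u) in hre.
  move: hre.
  case: (ip u u) => a b; case: (ip u y) => c d; case: (ip y y) => e f /=.
  move=> H. nra.
have [uu0 Y0] : True /\ True by [].
have hY := ipself y. have hU := ipself u.
set Y := complex.Re (ip y y). set U := complex.Re (ip u u). set r := complex.Re (ip u y).
have Yge : 0 <= Y by rewrite /Y hY /= exprn_ge0 // hnorm_ge0.
have Uge : 0 <= U by rewrite /U hU /= exprn_ge0 // hnorm_ge0.
case: (ltrgt0P Y) => [Ypos|Yneg|Y0'].
- have k := key (- r / Y).
  have e : - r / Y * Y = - r by rewrite mulfVK // gt_eqF.
  set t := - r / Y in k e.
  nra.
- by move: Yge; rewrite leNgt Yneg.
- have y0 : y = 0.
    case: hip => _ _ _ h4. apply: h4. rewrite hY.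
    have : complex.Re (ip y y) = 0 by [].
    rewrite hY /= => ->. done.
  by rewrite /r y0 ipC ip0l /= expr0n /= mulr_ge0.
Qed.


Lemma le_sqrt_sq (N c : R) : 0 <= c -> N <= c ^+ 2 -> Num.sqrt N <= c.
Proof. move=> hc hN. rewrite -(ger0_norm hc) -sqrtr_sqr. exact: ler_wsqrtr. Qed.

Lemma sq_aux (N Z : R) : 0 <= N -> 0 <= Z -> N ^+ 2 <= N * Z -> N <= Z.
Proof. move=> *; nra. Qed.

Lemma ip_cs x y : ComplexField.Normc.normc (ip x y) <= hnorm ip x * hnorm ip y.
Proof.
have h := ip_real_cs (Num.conj (ip x y) *: x) y.
rewrite !ipZ !ipZr (ipself x) (ipself y) in h.
have hx := hnorm_ge0 x. have hy := hnorm_ge0 y.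
move: h; set X := hnorm ip x; set Y := hnorm ip y.
case: (ip x y) => a b /= h.
apply: le_sqrt_sq; first exact: mulr_ge0.
apply: sq_aux; [nra | nra |].
apply: (le_trans _ (le_trans h _)); rewrite le_eqVlt; apply/orP; left; apply/eqP; ring.
Qed.


Lemma normc_real (c : R) : 0 <= c -> ComplexField.Normc.normc (c%:C) = c.
Proof. move=> hc /=. by rewrite expr0n /= addr0 sqrtr_sqr ger0_norm. Qed.

Lemma addC_real (a b : R) : a%:C + b%:C = (a + b)%:C.
Proof. rewrite /=; congr (_ +i* _); ring. Qed.

Lemma adjL T Ts x : is_adjoint ip T Ts -> ip (Ts (T x)) x = (hnorm ip (T x) ^+ 2)%:C.
Proof. move=> h. rewrite ipC -h ipself /=. congr (_ +i* _); ring. Qed.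

Lemma adjR T Ts x : is_adjoint ip T Ts -> ip (T (Ts x)) x = (hnorm ip (Ts x) ^+ 2)%:C.
Proof. move=> h. by rewrite h ipself. Qed.

Lemma adj_bound T Ts : bounded_operator ip T -> is_adjoint ip T Ts ->
  exists M, forall x, hnorm ip (T x) <= M * hnorm ip x /\ hnorm ip (Ts x) <= M * hnorm ip x.
Proof.
move=> [_ [M hM]] hadj. exists M => x; split; first exact: hM.
have h1 := ip_cs (T (Ts x)) x.
rewrite (adjR _ _ _ hadj) normc_real ?exprn_ge0 ?hnorm_ge0 // in h1.
have h2 := hM (Ts x). have h3 := hM x.
have := hnorm_ge0 (Ts x). have := hnorm_ge0 x. have := hnorm_ge0 (T x).
have := hnorm_ge0 (T (Ts x)).
move: h1 h2 h3.
set n := hnorm ip (Ts x); set h := hnorm ip x; set a := hnorm ip (T (Ts x)); set b := hnorm ip (T x).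
move=> h1 h2 h3 ha hb hh hn.
have e1 : n ^+ 2 <= M * h * n.
  have := ler_wpM2r hh h2. move=> h4. apply: (le_trans h1). apply: (le_trans h4).
  rewrite le_eqVlt; apply/orP; left; apply/eqP; ring.
have e2 : 0 <= M * h by apply: le_trans h3.
nra.
Qed.

Lemma cs2 (p q r s : R) : 0 <= p -> 0 <= q -> 0 <= r -> 0 <= s ->
  p * q + r * s <= Num.sqrt (p ^+ 2 + r ^+ 2) * Num.sqrt (q ^+ 2 + s ^+ 2).
Proof.
move=> hp hq hr hs.
have hL : 0 <= p * q + r * s by nra.
rewrite -sqrtrM; last by apply: addr_ge0; apply: sqr_ge0.
rewrite -(ger0_norm hL) -sqrtr_sqr. apply: ler_wsqrtr. have := sqr_ge0 (p * s - r * q). nra.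
Qed.

Lemma numrad_key T P Q (fP fQ : V -> R) :
  (forall x, hnorm ip x = 1 -> ip (P x) x = (fP x)%:C /\ 0 <= fP x) ->
  (forall x, hnorm ip x = 1 -> ip (Q x) x = (fQ x)%:C /\ 0 <= fQ x) ->
  (exists K, forall x, hnorm ip x = 1 -> fP x <= K) ->
  (exists K, forall x, hnorm ip x = 1 -> fQ x <= K) ->
  (forall x, hnorm ip x = 1 ->
     ComplexField.Normc.normc (ip (T x) x) <= Num.sqrt (fP x) * Num.sqrt (fQ x)) ->
  numrad ip T <= Num.sqrt (numrad ip P) * Num.sqrt (numrad ip Q).
Proof.
move=> hP hQ [KP hKP] [KQ hKQ] hT.
have leP : forall x, hnorm ip x = 1 -> fP x <= numrad ip P.
  move=> x hx. rewrite /numrad.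
  have hub : has_ubound [set ComplexField.Normc.normc (ip (P x) x) | x in [set x : V | hnorm ip x = 1]].
    exists KP => z [y hy <-]. have [-> h0] := hP y hy. rewrite normc_real //. exact: hKP.
  have := ub_le_sup hub. move=> /(_ (fP x)). apply.
  exists x => //. have [-> h0] := hP x hx. by rewrite normc_real.
have leQ : forall x, hnorm ip x = 1 -> fQ x <= numrad ip Q.
  move=> x hx. rewrite /numrad.
  have hub : has_ubound [set ComplexField.Normc.normc (ip (Q x) x) | x in [set x : V | hnorm ip x = 1]].
    exists KQ => z [y hy <-]. have [-> h0] := hQ y hy. rewrite normc_real //. exact: hKQ.
  have := ub_le_sup hub. move=> /(_ (fQ x)). apply.
  exists x => //. have [-> h0] := hQ x hx. by rewrite normc_real.
rewrite {1}/numrad.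
case: (pselect (exists x, hnorm ip x = 1)) => [[x0 hx0]|hne].
- apply: ge_sup; first by exists (ComplexField.Normc.normc (ip (T x0) x0)); exists x0.
  move=> z [y hy <-]. apply: (le_trans (hT y hy)).
  apply: ler_pM; try exact: sqrtr_ge0; apply: ler_wsqrtr; [exact: leP | exact: leQ].
- match goal with |- context[sup ?S] => have -> : S = set0 end.
    apply/seteqP; split => z //= [y hy _]. by apply: hne; exists y.
  rewrite sup0. apply: mulr_ge0; exact: sqrtr_ge0.
Qed.

End Aux.

Arguments ipD {R V ip} hip.
Arguments ipB {R V ip} hip.
Arguments hnorm_ge0 {R V ip}.
Arguments adjL {R V ip} hip.
Arguments adjR {R V ip} hip.
Arguments adj_bound {R V ip} hip {T Ts}.
Arguments ip_cs {R V ip} hip.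
Arguments numrad_key {R V ip T P Q fP fQ}.
Arguments addC_real {R}.
Arguments cs2 {R}.

Theorem theorem2p15 (R : realType) (V : lmodType R[i]) (ip : V -> V -> R[i])
  (hH : is_hilbert ip)
  (A B As Bs : V -> V)
  (hA : bounded_operator ip A) (hB : bounded_operator ip B)
  (hAs : is_adjoint ip A As) (hBs : is_adjoint ip B Bs) :
  (* (i) *)
  (numrad ip (fun x => A (B x) + B (A x))
     <= Num.sqrt (numrad ip (fun x => As (A x) + A (As x)))
        * Num.sqrt (numrad ip (fun x => Bs (B x) + B (Bs x))) /\
   numrad ip (fun x => A (B x) - B (A x))
     <= Num.sqrt (numrad ip (fun x => As (A x) + A (As x)))
        * Num.sqrt (numrad ip (fun x => Bs (B x) + B (Bs x)))) /\
  (* (ii) *)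
  (numrad ip (fun x => A (B x) + B (A x))
     <= Num.sqrt (numrad ip (fun x => As (A x) + Bs (B x)))
        * Num.sqrt (numrad ip (fun x => A (As x) + B (Bs x))) /\
   numrad ip (fun x => A (B x) - B (A x))
     <= Num.sqrt (numrad ip (fun x => As (A x) + Bs (B x)))
        * Num.sqrt (numrad ip (fun x => A (As x) + B (Bs x)))).
Proof.
move: hH => [hip _].
have [MA hMA] := adj_bound hip hA hAs.
have [MB hMB] := adj_bound hip hB hBs.
have nn := @hnorm_ge0 _ _ ip.
have bA : forall x, hnorm ip x = 1 -> hnorm ip (A x) ^+ 2 <= MA ^+ 2 /\ hnorm ip (As x) ^+ 2 <= MA ^+ 2.
  move=> x hx; have [h1 h2] := hMA x; rewrite hx mulr1 in h1 h2.
  have := nn (A x); have := nn (As x); split; nra.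
have bB : forall x, hnorm ip x = 1 -> hnorm ip (B x) ^+ 2 <= MB ^+ 2 /\ hnorm ip (Bs x) ^+ 2 <= MB ^+ 2.
  move=> x hx; have [h1 h2] := hMB x; rewrite hx mulr1 in h1 h2.
  have := nn (B x); have := nn (Bs x); split; nra.
have cross : forall x, hnorm ip x = 1 ->
   ComplexField.Normc.normc (ip (A (B x) + B (A x)) x) <=
     hnorm ip (B x) * hnorm ip (As x) + hnorm ip (A x) * hnorm ip (Bs x) /\
   ComplexField.Normc.normc (ip (A (B x) - B (A x)) x) <=
     hnorm ip (B x) * hnorm ip (As x) + hnorm ip (A x) * hnorm ip (Bs x).
  move=> x hx. rewrite (ipD hip) (ipB hip) (hAs (B x) x) (hBs (A x) x).
  split; apply: (le_trans (le_normcD _ _)); rewrite ?normcN;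
    apply: lerD; exact: (ip_cs hip).
have P1 : forall x, hnorm ip x = 1 -> ip (As (A x) + A (As x)) x =
    (hnorm ip (A x) ^+ 2 + hnorm ip (As x) ^+ 2)%:C /\ 0 <= hnorm ip (A x) ^+ 2 + hnorm ip (As x) ^+ 2.
  move=> x _. rewrite (ipD hip) (adjL hip _ _ _ hAs) (adjR hip _ _ _ hAs) addC_real.
  split => //; apply: addr_ge0; exact: sqr_ge0.
have Q1 : forall x, hnorm ip x = 1 -> ip (Bs (B x) + B (Bs x)) x =
    (hnorm ip (B x) ^+ 2 + hnorm ip (Bs x) ^+ 2)%:C /\ 0 <= hnorm ip (B x) ^+ 2 + hnorm ip (Bs x) ^+ 2.
  move=> x _. rewrite (ipD hip) (adjL hip _ _ _ hBs) (adjR hip _ _ _ hBs) addC_real.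
  split => //; apply: addr_ge0; exact: sqr_ge0.
have P2 : forall x, hnorm ip x = 1 -> ip (As (A x) + Bs (B x)) x =
    (hnorm ip (A x) ^+ 2 + hnorm ip (B x) ^+ 2)%:C /\ 0 <= hnorm ip (A x) ^+ 2 + hnorm ip (B x) ^+ 2.
  move=> x _. rewrite (ipD hip) (adjL hip _ _ _ hAs) (adjL hip _ _ _ hBs) addC_real.
  split => //; apply: addr_ge0; exact: sqr_ge0.
have Q2 : forall x, hnorm ip x = 1 -> ip (A (As x) + B (Bs x)) x =
    (hnorm ip (As x) ^+ 2 + hnorm ip (Bs x) ^+ 2)%:C /\ 0 <= hnorm ip (As x) ^+ 2 + hnorm ip (Bs x) ^+ 2.
  move=> x _. rewrite (ipD hip) (adjR hip _ _ _ hAs) (adjR hip _ _ _ hBs) addC_real.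
  split => //; apply: addr_ge0; exact: sqr_ge0.
have KP1 : exists K, forall x, hnorm ip x = 1 -> hnorm ip (A x) ^+ 2 + hnorm ip (As x) ^+ 2 <= K.
  exists (MA ^+ 2 + MA ^+ 2) => x hx; have [h1 h2] := bA x hx; exact: lerD.
have KQ1 : exists K, forall x, hnorm ip x = 1 -> hnorm ip (B x) ^+ 2 + hnorm ip (Bs x) ^+ 2 <= K.
  exists (MB ^+ 2 + MB ^+ 2) => x hx; have [h1 h2] := bB x hx; exact: lerD.
have KP2 : exists K, forall x, hnorm ip x = 1 -> hnorm ip (A x) ^+ 2 + hnorm ip (B x) ^+ 2 <= K.
  exists (MA ^+ 2 + MB ^+ 2) => x hx; have [h1 h2] := bA x hx; have [h3 h4] := bB x hx; exact: lerD.
have KQ2 : exists K, forall x, hnorm ip x = 1 -> hnorm ip (As x) ^+ 2 + hnorm ip (Bs x) ^+ 2 <= K.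
  exists (MA ^+ 2 + MB ^+ 2) => x hx; have [h1 h2] := bA x hx; have [h3 h4] := bB x hx; exact: lerD.
have S1 : forall x, hnorm ip (B x) * hnorm ip (As x) + hnorm ip (A x) * hnorm ip (Bs x) <=
   Num.sqrt (hnorm ip (A x) ^+ 2 + hnorm ip (As x) ^+ 2) * Num.sqrt (hnorm ip (B x) ^+ 2 + hnorm ip (Bs x) ^+ 2).
  move=> x. rewrite (addrC (hnorm ip (A x) ^+ 2)) (mulrC (hnorm ip (B x))).
  by apply: cs2; apply: nn.
have S2 : forall x, hnorm ip (B x) * hnorm ip (As x) + hnorm ip (A x) * hnorm ip (Bs x) <=
   Num.sqrt (hnorm ip (A x) ^+ 2 + hnorm ip (B x) ^+ 2) * Num.sqrt (hnorm ip (As x) ^+ 2 + hnorm ip (Bs x) ^+ 2).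
  move=> x. rewrite (addrC (hnorm ip (As x) ^+ 2)) [X in X <= _]addrC.
  by apply: cs2; apply: nn.
split; split.
- apply: (numrad_key P1 Q1 KP1 KQ1) => x hx.
  exact: (le_trans (cross x hx).1 (S1 x)).
- apply: (numrad_key P1 Q1 KP1 KQ1) => x hx.
  exact: (le_trans (cross x hx).2 (S1 x)).
- apply: (numrad_key P2 Q2 KP2 KQ2) => x hx.
  exact: (le_trans (cross x hx).1 (S2 x)).
- apply: (numrad_key P2 Q2 KP2 KQ2) => x hx.
  exact: (le_trans (cross x hx).2 (S2 x)).
Qed.
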